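(* Let $R$ be a commutative ring with identity such that every super finitely presented $R$-module has finite projective dimension. Then the natural group homomorphism $\theta_R:K_0(R)\to S_0(R)$, $[P]\mapsto[P]$ for finitely generated projective $P$, is an isomorphism.
   Context: An $R$-module $M$ is super finitely presented if there is an exact sequence $\cdots\to P_1\to P_0\to M\to 0$ with every $P_i$ finitely generated projective. For a class $\mathcal{C}$ of $R$-modules, its Grothendieck group is the free abelian group on isomorphism classes $(M)$, $M\in\mathcal{C}$, modulo the subgroup generated by $(M)-(M_1)-(M_2)$ for every exact sequence $0\to M_1\to M\to M_2\to 0$ in $\mathcal{C}$; $[M]$ denotes the image of $(M)$. $K_0(R)$ is the Grothendieck group of the class of finitely generated projective $R$-modules, and $S_0(R)$ is the Grothendieck group of the class of super finitely presented $R$-modules. Since finitely generated projective modules are super finitely presented, inclusion induces $\theta_R$. *)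

(* Defs.v *)
From HB Require Import structures.
From mathcomp Require Import all_boot all_order all_algebra.
From Stdlib Require Import ClassicalDescription.
Set Implicit Arguments. Unset Strict Implicit. Unset Printing Implicit Defensive.
Import GRing.Theory.
Local Open Scope ring_scope.

(* Modules over a commutative ring R (with identity; the zero ring allowed)
   are MathComp left modules  lmodType R ; R-linear maps are {linear M -> N}. *)
Section Modules.
Variable R : comPzRingType.

Definition surj (M N : lmodType R) (g : M -> N) : Prop :=
  forall y : N, exists x : M, g x = y.

Definition exact_at (A B C : lmodType R) (f : A -> B) (g : B -> C) : Prop :=
  forall y : B, g y = 0 <-> exists x : A, f x = y.

Definition fin_gen (M : lmodType R) : Prop :=
  exists (n : nat) (v : 'I_n -> M),
    forall m : M, exists c : 'I_n -> R, m = \sum_(i < n) c i *: v i.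

Definition projective (P : lmodType R) : Prop :=
  forall (M N : lmodType R) (g : {linear M -> N}) (f : {linear P -> N}),
    surj g -> exists h : {linear P -> M}, forall p : P, g (h p) = f p.

Definition fg_projective (P : lmodType R) : Prop := fin_gen P /\ projective P.

(* an exact sequence  ... -> P 2 --d 1--> P 1 --d 0--> P 0 --e--> M -> 0
   with every P i satisfying Q i *)
Definition resolution (Q : nat -> lmodType R -> Prop) (M : lmodType R) : Prop :=
  exists (P : nat -> lmodType R) (d : forall i, {linear P i.+1 -> P i})
         (e : {linear P 0%N -> M}),
    [/\ forall i, Q i (P i), surj e, exact_at (d 0%N) e
      & forall i, exact_at (d i.+1) (d i)].

Definition super_fin_pres (M : lmodType R) : Prop :=
  resolution (fun _ => fg_projective) M.

Definition trivial_mod (M : lmodType R) : Prop := forall x : M, x = 0.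

Definition pd_le (n : nat) (M : lmodType R) : Prop :=
  resolution (fun i P => projective P /\ ((n < i)%N -> trivial_mod P)) M.

Definition finite_pd (M : lmodType R) : Prop := exists n, pd_le n M.

Definition mod_iso (M N : lmodType R) : Prop :=
  exists f : {linear M -> N}, bijective f.

Definition short_exact (M1 M M2 : lmodType R) : Prop :=
  exists (f : {linear M1 -> M}) (g : {linear M -> M2}),
    [/\ injective f, surj g & exact_at f g].

(* ---- Grothendieck groups ----
   The free abelian group on the modules of a class C, modulo (M)-(N) for
   M ~= N (this realizes the free abelian group on isomorphism classes),
   modulo (M)-(M1)-(M2) for short exact sequences in C. *)
Definition fsum := seq (int * lmodType R).

Definition coef (s : fsum) (M : lmodType R) : int :=
  \sum_(p <- s) (if excluded_middle_informative (p.2 = M) then p.1 else 0).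

(* two formal sums are equal in the free abelian group iff all coefficients agree *)
Definition free_eq (s t : fsum) : Prop := forall M, coef s M = coef t M.

Definition fscale (n : int) (s : fsum) : fsum := map (fun p => (n * p.1, p.2)) s.

Definition supported (C : lmodType R -> Prop) (s : fsum) : Prop :=
  List.Forall (fun p => C p.2) s.

Definition groth_gen (C : lmodType R -> Prop) (g : fsum) : Prop :=
  (exists M N, [/\ C M, C N, mod_iso M N & g = [:: (1, M); (-1, N)]])
  \/ (exists M1 M M2, [/\ C M1, C M, C M2, short_exact M1 M M2
                        & g = [:: (1, M); (-1, M1); (-1, M2)]]).

(* s lies in the subgroup generated by the relations *)
Definition groth_rel (C : lmodType R -> Prop) (s : fsum) : Prop :=
  exists gs : seq (int * fsum),
    List.Forall (fun q => groth_gen C q.2) gs /\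
    free_eq s (flatten (map (fun q => fscale q.1 q.2) gs)).

Definition groth_eq (C : lmodType R -> Prop) (s t : fsum) : Prop :=
  groth_rel C (s ++ fscale (-1) t).

(* For C ⊆ D, the map  G(C) -> G(D),  [s] |-> [s]  is a well-defined
   isomorphism (it is additive by construction). *)
Definition groth_incl_iso (C D : lmodType R -> Prop) : Prop :=
  [/\ forall s t, supported C s -> supported C t -> groth_eq C s t -> groth_eq D s t,
      forall s t, supported C s -> supported C t -> groth_eq D s t -> groth_eq C s t
    & forall s, supported D s -> exists t, supported C t /\ groth_eq D s t].

Definition theta_is_iso : Prop := groth_incl_iso fg_projective super_fin_pres.

End Modules.

(* Main.v *)
From HB Require Import structures.
From mathcomp Require Import all_boot all_order all_algebra.
From Stdlib Require Import ClassicalDescription.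
From Stdlib Require ClassicalEpsilon.
Require Import Defs.
From mathcomp Require Import ring zify.
Set Implicit Arguments. Unset Strict Implicit. Unset Printing Implicit Defensive.
Set Warnings "-redundant-canonical-projection -projection-no-head-constant".
Import GRing.Theory.
Local Open Scope ring_scope.

Section Basics.
Variable R : comPzRingType.
Implicit Types M N P Q A B C K Z X : lmodType R.

Definition mklin M N (f : M -> N) (H : linear f) : {linear M -> N} :=
  HB.pack f (GRing.isLinear.Build _ _ _ _ f H).

Section Ker.
Variables (A B : lmodType R) (f : {linear A -> B}).
Definition kerp : {pred A} := [pred x | f x == 0].
Fact kerp_closed : submod_closed kerp.
Proof.
split=> [|a u v]; rewrite !inE ?linear0 // => /eqP fu /eqP fv.
by rewrite linearP fu fv scaler0 addr0.
Qed.
HB.instance Definition _ := GRing.isSubmodClosed.Build R A kerp kerp_closed.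
Inductive kerT : predArgType := KerT u & u \in kerp.
Definition kval (w : kerT) : A := let: KerT u _ := w in u.
HB.instance Definition _ := [isSub of kerT for kval].
HB.instance Definition _ := [Choice of kerT by <:].
HB.instance Definition _ := [SubChoice_isSubZmodule of kerT by <:].
HB.instance Definition _ := [SubZmodule_isSubLmodule of kerT by <:].
Lemma kval_lin : linear kval. Proof. by []. Qed.
Definition kinc : {linear kerT -> A} := mklin kval_lin.
Lemma kinc_inj : injective kinc. Proof. exact: val_inj. Qed.
Lemma kincP x : f (kinc x) = 0. Proof. by case: x => u /= /eqP. Qed.
Lemma kerE y : f y = 0 -> exists x, kinc x = y.
Proof. by move=> /eqP fy; exists (KerT fy). Qed.
End Ker.

Lemma comp_lin_proof M N P (f : {linear N -> P}) (g : {linear M -> N}) :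
  linear (fun x => f (g x)).
Proof. by move=> a x y; rewrite !linearP. Qed.
Definition complin M N P (f : {linear N -> P}) (g : {linear M -> N}) :=
  mklin (comp_lin_proof f g).

Lemma zero_lin_proof M N : linear (fun _ : M => (0 : N)).
Proof. by move=> a x y; rewrite scaler0 addr0. Qed.
Definition zlin M N := mklin (@zero_lin_proof M N).

Lemma id_lin_proof M : linear (fun x : M => x). Proof. by []. Qed.
Definition idlin M := mklin (@id_lin_proof M).

Definition Zm M : lmodType R := kerT (@idlin M).
Lemma Zm_triv M : trivial_mod (Zm M).
Proof. move=> x; apply: kinc_inj; rewrite linear0; exact: (kincP x). Qed.

Lemma pairLE M N (a : R) (u v : M * N) : a *: u + v = (a *: u.1 + v.1, a *: u.2 + v.2).
Proof. by []. Qed.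
Lemma inl_lin_proof M N : linear (fun x : M => (x, (0 : N))).
Proof. by move=> a x y; rewrite pairLE /= scaler0 addr0. Qed.
Definition inll M N := mklin (@inl_lin_proof M N).
Lemma inr_lin_proof M N : linear (fun x : N => ((0 : M), x)).
Proof. by move=> a x y; rewrite pairLE /= scaler0 addr0. Qed.
Definition inrl M N := mklin (@inr_lin_proof M N).
Lemma fst_lin_proof M N : linear (fun x : M * N => x.1). Proof. by []. Qed.
Definition fstl M N := mklin (@fst_lin_proof M N).
Lemma snd_lin_proof M N : linear (fun x : M * N => x.2). Proof. by []. Qed.
Definition sndl M N := mklin (@snd_lin_proof M N).
Lemma pair_lin_proof M N P (f : {linear M -> N}) (g : {linear M -> P}) :
  linear (fun x => (f x, g x)).
Proof. by move=> a x y; rewrite !linearP. Qed.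
Definition pairl M N P f g := mklin (@pair_lin_proof M N P f g).
Lemma copair_lin_proof M N P (f : {linear M -> P}) (g : {linear N -> P}) :
  linear (fun x : M * N => f x.1 + g x.2).
Proof. move=> a x y /=; rewrite !linearP scalerDr; rewrite -!addrA; congr (_ + _).
by rewrite addrCA. Qed.
Definition copairl M N P f g := mklin (@copair_lin_proof M N P f g).

Lemma mkiso M N (f : {linear M -> N}) (g : N -> M) :
  cancel f g -> cancel g f -> mod_iso M N.
Proof. by move=> fg gf; exists f; exists g. Qed.

Lemma inv_lin_proof M N (f : {linear M -> N}) (g : N -> M) :
  cancel f g -> cancel g f -> linear g.
Proof.
move=> fg gf a x y; apply: (can_inj fg); by rewrite linearP !gf.
Qed.

Lemma iso_refl M : mod_iso M M.
Proof. by apply: (@mkiso _ _ (@idlin M) id). Qed.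
Lemma iso_sym M N : mod_iso M N -> mod_iso N M.
Proof.
case=> f [g fg gf]; exact: (@mkiso _ _ (mklin (inv_lin_proof fg gf)) f).
Qed.
Lemma iso_trans M N P : mod_iso M N -> mod_iso N P -> mod_iso M P.
Proof.
case=> f [f' ff gf] [g [g' gg gg']].
apply: (@mkiso _ _ (complin g f) (fun x => f' (g' x))) => x /=.
  by rewrite /complin /mklin /= gg ff.
by rewrite /complin /mklin /= gf gg'.
Qed.
Lemma iso_prod M M' A A' : mod_iso M M' -> mod_iso A A' -> mod_iso (prod M A) (prod M' A').
Proof.
case=> f [f' ff ff'] [g [g' gg gg']].
pose h := pairl (complin f (@fstl M A)) (complin g (@sndl M A)).
apply: (@mkiso _ _ h (fun x => (f' x.1, g' x.2))) => [[x y]|[x y]] /=.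
  by rewrite /h /= ff gg.
by rewrite /h /= ff' gg'.
Qed.
Lemma iso_comm M N : mod_iso (prod M N) (prod N M).
Proof.
apply: (@mkiso _ _ (pairl (@sndl M N) (@fstl M N)) (fun x => (x.2, x.1))) => [[x y]|[x y]]. by []. by [].
Qed.
Lemma iso_assoc M N P : mod_iso (prod (prod M N) P) (prod M (prod N P)).
Proof.
pose f := pairl (complin (@fstl M N) (@fstl (prod M N) P))
                (pairl (complin (@sndl M N) (@fstl (prod M N) P)) (@sndl (prod M N) P)).
by apply: (@mkiso _ _ f (fun x => ((x.1, x.2.1), x.2.2))) => [[[x y] z]|[x [y z]]].
Qed.
Lemma iso_triv_l M Z : trivial_mod Z -> mod_iso (prod Z M) M.
Proof.
move=> tZ; apply: (@mkiso _ _ (@sndl Z M) (fun x => (0, x))) => // [[z x]] /=.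
by rewrite (tZ z).
Qed.
Lemma iso_triv M N : trivial_mod M -> trivial_mod N -> mod_iso M N.
Proof.
move=> tM tN; apply: (@mkiso _ _ (@zlin M N) (fun _ => 0)) => x.
  by rewrite (tM x). by rewrite (tN x).
Qed.

Lemma add_lin_proof M N (f g : {linear M -> N}) : linear (fun x => f x + g x).
Proof. by move=> a x y; rewrite !linearP scalerDr addrACA. Qed.
Definition addl M N f g := mklin (@add_lin_proof M N f g).
Lemma neg_lin_proof M N (f : {linear M -> N}) : linear (fun x => - f x).
Proof. by move=> a x y /=; rewrite linearP opprD scalerN. Qed.
Definition negl M N f := mklin (@neg_lin_proof M N f).

Lemma iso_inv M N : mod_iso M N ->
  exists (f : {linear M -> N}) (g : {linear N -> M}), cancel f g /\ cancel g f.
Proof.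
case=> f [g fg gf]; exists f, (mklin (inv_lin_proof fg gf)); by split.
Qed.

Lemma proj_iso P P' : projective P -> mod_iso P P' -> projective P'.
Proof.
move=> pP /iso_inv [phi [gam [pg gp]]] M N g f sg.
have [H HP] := pP M N g (complin f phi) sg.
exists (complin H gam) => p /=; rewrite /complin /mklin /= HP /= gp //.
Qed.

Lemma proj_triv Z : trivial_mod Z -> projective Z.
Proof.
move=> tZ M N g f sg; exists (@zlin Z M) => p /=.
by rewrite linear0 (tZ p) linear0.
Qed.

Lemma proj_prod P Q : projective P -> projective Q -> projective (prod P Q).
Proof.
move=> pP pQ M N g f sg.
have [h1 H1] := pP M N g (complin f (@inll P Q)) sg.
have [h2 H2] := pQ M N g (complin f (@inrl P Q)) sg.
exists (copairl h1 h2) => [[x y]] /=.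
rewrite linearD H1 H2 /= -linearD /=; congr (f _).
by rewrite -[(x, 0)]scale1r pairLE /= !scale1r addr0 add0r.
Qed.

Lemma proj_summand P Q : projective (prod P Q) -> projective P.
Proof.
move=> pPQ M N g f sg.
have [H HP] := pPQ M N g (complin f (@fstl P Q)) sg.
by exists (complin H (@inll P Q)) => p /=; rewrite HP.
Qed.

Lemma fg_surj M N (g : {linear M -> N}) : fin_gen M -> surj g -> fin_gen N.
Proof.
case=> n [v Hv] sg; exists n, (fun i => g (v i)) => m.
have [x <-] := sg m; have [c ->] := Hv x.
by exists c; rewrite linear_sum; apply: eq_bigr => i _; rewrite linearZ.
Qed.

Lemma fg_triv Z : trivial_mod Z -> fin_gen Z.
Proof.
move=> tZ; exists 0%N, (fun _ => 0) => m; exists (fun _ => 0).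
by rewrite big_ord0 (tZ m).
Qed.

Lemma fst_sum M N n (F : 'I_n -> prod M N) : (\sum_i F i).1 = \sum_i (F i).1.
Proof. by elim/big_rec2: _ => // i a b _ <-. Qed.
Lemma snd_sum M N n (F : 'I_n -> prod M N) : (\sum_i F i).2 = \sum_i (F i).2.
Proof. by elim/big_rec2: _ => // i a b _ <-. Qed.

Lemma fg_prod M N : fin_gen M -> fin_gen N -> fin_gen (prod M N).
Proof.
case=> n [v Hv] [m [w Hw]].
exists (n + m)%N, (fun i => match split i with inl j => (v j, 0) | inr k => (0, w k) end).
case=> x y; have [c1 ->] := Hv x; have [c2 ->] := Hw y.
exists (fun i => match split i with inl j => c1 j | inr k => c2 k end).
rewrite big_split_ord.
apply: injective_projections; rewrite /= ?fst_sum ?snd_sum /=.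
  rewrite -[X in X = _]addr0; congr (_ + _).
    by apply: eq_bigr => i _; rewrite (unsplitK (inl i)).
  by rewrite big1 // => i _; rewrite (unsplitK (inr i)) /= scaler0.
rewrite -[X in X = _]add0r; congr (_ + _).
  by rewrite big1 // => i _; rewrite (unsplitK (inl i)) /= scaler0.
by apply: eq_bigr => i _; rewrite (unsplitK (inr i)).
Qed.

Lemma fgproj_iso P P' : fg_projective P -> mod_iso P P' -> fg_projective P'.
Proof.
move=> [fP pP] I; split; last exact: proj_iso I.
by case: I => f [g fg gf]; apply: (fg_surj fP) => y; exists (g y).
Qed.
Lemma fgproj_prod P Q : fg_projective P -> fg_projective Q -> fg_projective (prod P Q).
Proof. by move=> [??] [??]; split; [apply: fg_prod|apply: proj_prod]. Qed.
Lemma fgproj_summand P Q : fg_projective (prod P Q) -> fg_projective P.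
Proof.
move=> [fPQ pPQ]; split; last exact: proj_summand pPQ.
by apply: (fg_surj (g := @fstl P Q) fPQ) => y; exists (y, 0).
Qed.
Lemma fgproj_triv Z : trivial_mod Z -> fg_projective Z.
Proof. by move=> tZ; split; [apply: fg_triv|apply: proj_triv]. Qed.

Lemma factor_inj K Q X (i : {linear K -> Q}) (g : {linear X -> Q}) :
  injective i -> (forall x, exists k, i k = g x) ->
  exists h : {linear X -> K}, forall x, i (h x) = g x.
Proof.
move=> ii Hg.
pose h x := ClassicalEpsilon.epsilon (inhabits (0 : K)) (fun k => i k = g x).
have hP x : i (h x) = g x by apply: (ClassicalEpsilon.epsilon_spec (inhabits (0 : K)) (fun k => i k = g x)).
have hl : linear h by move=> a x y; apply: ii; rewrite linearP !hP linearP.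
by exists (mklin hl).
Qed.

Lemma schanuel K Q K' Q' N :
  short_exact K Q N -> short_exact K' Q' N -> projective Q -> projective Q' ->
  mod_iso (prod K Q') (prod K' Q).
Proof.
move=> [i [p [ii sp ep]]] [i' [p' [ii' sp' ep']]] pQ pQ'.
have [al Hal] := pQ _ _ p' p sp'.
have [be Hbe] := pQ' _ _ p p' sp.
have pi0 k : p (i k) = 0 by apply/ep; exists k.
have pi0' k : p' (i' k) = 0 by apply/ep'; exists k.
pose u := addl (complin be (@sndl K Q')) (complin i (@fstl K Q')).
pose g1 := addl (@sndl K Q') (negl (complin al u)).
have [r1 Hr1] : exists h : {linear prod K Q' -> K'}, forall x, i' (h x) = g1 x.
  apply: factor_inj => // x; apply/ep'; rewrite /g1 /u /=.
  by rewrite linearD linearN Hal linearD Hbe pi0 addr0 subrr.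
pose v := addl (complin al (@sndl K' Q)) (complin i' (@fstl K' Q)).
pose g2 := addl (@sndl K' Q) (negl (complin be v)).
have [r2 Hr2] : exists h : {linear prod K' Q -> K}, forall x, i (h x) = g2 x.
  apply: factor_inj => // x; apply/ep; rewrite /g2 /v /=.
  by rewrite linearD linearN Hbe linearD Hal pi0' addr0 subrr.
apply: (@mkiso _ _ (pairl r1 u) (fun y => (r2 y, v y))).
  case=> k q' /=; apply: injective_projections => //=.
    apply: ii; rewrite Hr2 /g2 /v /= Hr1 /g1 /u /=.
    by rewrite [al _ + _]addrC addrNK [be q' + _]addrC addrK.
  by rewrite /v /= Hr1 /g1 /u /= addrC addrNK.
case=> k' q /=; apply: injective_projections => //=.
  apply: ii'; rewrite Hr1 /g1 /u /= Hr2 /g2 /v /=.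
  by rewrite [be _ + _]addrC addrNK [al q + _]addrC addrK.
by rewrite /u /= Hr2 /g2 /v /= addrC addrNK.
Qed.

Lemma ses_ker0 B C (g : {linear B -> C}) : surj g -> short_exact (kerT g) B C.
Proof.
move=> sg; exists (kinc g), g; split => //; first exact: kinc_inj.
move=> y; split; [exact: kerE | by case=> x <-; exact: kincP].
Qed.

Lemma ses_ker A B C (f : {linear A -> B}) (g : {linear B -> C}) :
  exact_at f g -> short_exact (kerT f) A (kerT g).
Proof.
move=> ex.
have [h Hh] : exists h : {linear A -> kerT g}, forall x, kinc g (h x) = f x.
  apply: factor_inj; first exact: kinc_inj.
  by move=> x; apply: kerE; apply/ex; exists x.
exists (kinc f), h; split; first exact: kinc_inj.
- move=> y; have /ex [x fx] := kincP y; exists x.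
  by apply: kinc_inj; rewrite Hh.
- move=> y; split.
    move=> hy; apply: kerE; by rewrite -Hh hy linear0.
  by case=> x <-; apply: kinc_inj; rewrite Hh kincP linear0.
Qed.

Lemma ses_prod K P M A : short_exact K P M -> short_exact K (prod P A) (prod M A).
Proof.
move=> [i [p [ii sp ep]]].
exists (complin (@inll P A) i), (pairl (complin p (@fstl P A)) (@sndl P A)).
split.
- by move=> x y /= [] /ii.
- case=> m a; have [x <-] := sp m; by exists (x, a).
- case=> x a /=; split.
    by case=> /ep [k <-] ->; exists k.
  by case=> k [<- <-]; rewrite /=; congr pair; apply/ep; exists k.
Qed.

Lemma ses_iso_r K P M N : short_exact K P M -> mod_iso M N -> short_exact K P N.
Proof.
move=> [i [p [ii sp ep]]] /iso_inv [f [g [fg gf]]].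
exists i, (complin f p); split => //.
- by move=> n; have [x px] := sp (g n); exists x; rewrite /= px gf.
- move=> y; rewrite -ep /=; split => [fy|->]; last by rewrite linear0.
  by rewrite -(fg (p y)) fy linear0.
Qed.

Lemma ses_split M A : short_exact M (prod M A) A.
Proof.
exists (@inll M A), (@sndl M A); split.
- by move=> x y [].
- by move=> a; exists (0, a).
- case=> x a /=; split => [->|[k E]]; first by exists x.
  by case: E => _ <-.
Qed.

Lemma ses_triv Z M : trivial_mod Z -> short_exact Z M M.
Proof.
move=> tZ; exists (@zlin Z M), (@idlin M); split.
- by move=> x y _; rewrite (tZ x) (tZ y).
- by move=> y; exists y.
- by move=> y /=; split => [->|[x <-]] //; exists 0.
Qed.

Lemma stable_schanuel K P M K' P' M' A B :
  short_exact K P M -> short_exact K' P' M' ->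
  projective P -> projective P' -> projective A -> projective B ->
  mod_iso (prod M A) (prod M' B) ->
  mod_iso (prod K (prod P' B)) (prod K' (prod P A)).
Proof.
move=> s1 s2 pP pP' pA pB I.
apply: (schanuel (N := prod M' B)).
- exact: ses_iso_r (ses_prod A s1) I.
- exact: ses_prod.
- exact: proj_prod.
- exact: proj_prod.
Qed.

Lemma horseshoe M1 M M2 K1 P1 K2 P2 :
  short_exact M1 M M2 -> short_exact K1 P1 M1 -> short_exact K2 P2 M2 ->
  projective P2 ->
  exists K, short_exact K (prod P1 P2) M /\ short_exact K1 K K2.
Proof.
move=> [f [g [fi gs ex]]] [i1 [p1 [ii1 sp1 ep1]]] [i2 [p2 [ii2 sp2 ep2]]] pP2.
have [h Hh] := pP2 _ _ g p2 gs.
pose pi := copairl (complin f p1) h.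
have spi : surj pi.
  move=> m; have [y py] := sp2 (g m).
  have : g (m - h y) = 0 by rewrite linearB Hh py subrr.
  case/ex => m1 fm1; have [x px] := sp1 m1.
  exists (x, y); rewrite /pi /= px; change (f m1 + h y = m); by rewrite fm1 subrK.
exists (kerT pi); split; first exact: ses_ker0.
have [j Hj] : exists j : {linear K1 -> kerT pi},
    forall k, kinc pi (j k) = complin (@inll P1 P2) i1 k.
  apply: factor_inj; first exact: kinc_inj.
  move=> k; apply: kerE; rewrite /pi /=.
  have -> : p1 (i1 k) = 0 by apply/ep1; exists k.
  by rewrite !linear0 addr0.
have pg k : p2 (kinc pi k).2 = 0.
  have := kincP k; case: (kinc pi k) => x y; rewrite /pi /= => E.
  by rewrite -Hh -(linear0 g) -E linearD (_ : g (f _) = 0) ?add0r //; apply/ex; eexists.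
have [q Hq] : exists q : {linear kerT pi -> K2},
    forall k, i2 (q k) = complin (@sndl P1 P2) (kinc pi) k.
  by apply: factor_inj => // k; apply/ep2; exact: pg k.
exists j, q; split.
- by move=> a b /(congr1 (kinc pi)); rewrite !Hj /= => [[]] /ii1.
- move=> k2; set y := i2 k2.
  have : g (h y) = 0 by rewrite Hh; apply/ep2; exists k2.
  case/ex => m1 fm1; have [x px] := sp1 m1.
  have : pi (- x, y) = 0 by rewrite /pi /= !linearN px fm1 addNr.
  case/kerE => k Ek; exists k; apply: ii2; rewrite Hq.
  change ((kinc pi k).2 = i2 k2); by rewrite Ek.
- move=> k; split.
    move=> qk; have : (kinc pi k).2 = 0.
      by rewrite -[LHS]/(complin (@sndl P1 P2) (kinc pi) k) -Hq qk linear0.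
    have := kincP k; case E: (kinc pi k) => [x y]; rewrite /pi /= => Epi y0.
    move: Epi; rewrite y0 linear0 addr0 => /eqP; rewrite -(linear0 f).
    move/eqP/fi => /ep1 [k1 Ek1]; exists k1; apply: kinc_inj.
    by rewrite Hj E /= Ek1 y0.
  case=> k1 <-; apply: ii2; rewrite Hq linear0.
  by change ((kinc pi (j k1)).2 = 0); rewrite Hj.
Qed.

Definition ind (N M : lmodType R) : int :=
  if excluded_middle_informative (N = M) then 1 else 0.

Lemma coef_nil M : coef ([::] : fsum R) M = 0.
Proof. by rewrite /coef big_nil. Qed.
Lemma coef_cons (a : int) N (s : fsum R) M :
  coef ((a, N) :: s) M = a * ind N M + coef s M.
Proof.
rewrite /coef big_cons /ind /=.
by case: (excluded_middle_informative (N = M)) => H; rewrite ?mulr1 ?mulr0.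
Qed.
Lemma coef_cat (s t : fsum R) M : coef (s ++ t) M = coef s M + coef t M.
Proof. by rewrite /coef big_cat. Qed.
Lemma coef_scale n (s : fsum R) M : coef (fscale n s) M = n * coef s M.
Proof.
elim: s => [|[a N] s IH]; first by rewrite /fscale /= !coef_nil mulr0.
by rewrite /fscale /= coef_cons -/(fscale n s) IH coef_cons mulrDr mulrA.
Qed.
Lemma coef_flatten (l : seq (int * fsum R)) M :
  coef (flatten (map (fun q => fscale q.1 q.2) l)) M = \sum_(q <- l) q.1 * coef q.2 M.
Proof.
elim: l => [|q l IH]; first by rewrite /= coef_nil big_nil.
by rewrite /= coef_cat IH coef_scale big_cons.
Qed.

Section Rel.
Variable Cl : lmodType R -> Prop.
Local Notation rel := (groth_rel Cl).

Lemma rel_nil : rel [::].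
Proof. by exists [::]; split => // M. Qed.

Lemma rel_free a b : free_eq a b -> rel a -> rel b.
Proof. by move=> fab [gs [Fg Fa]]; exists gs; split => // M; rewrite -fab Fa. Qed.

Lemma rel_cat a b : rel a -> rel b -> rel (a ++ b).
Proof.
move=> [g1 [F1 E1]] [g2 [F2 E2]]; exists (g1 ++ g2); split.
  by apply/List.Forall_app; split.
by move=> M; rewrite coef_cat E1 E2 !coef_flatten big_cat.
Qed.

Lemma rel_scale n a : rel a -> rel (fscale n a).
Proof.
move=> [gs [F E]]; exists (map (fun q => (n * q.1, q.2)) gs); split.
  elim: gs F {E} => [|q gs IH] F //=; inversion F; constructor; auto.
move=> M; rewrite coef_scale E !coef_flatten big_map big_distrr.
by apply: eq_bigr => q _ /=; rewrite mulrA.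
Qed.

Lemma rel_gen g : groth_gen Cl g -> rel g.
Proof.
move=> Hg; exists [:: (1, g)]; split; first by constructor.
by move=> M; rewrite coef_flatten big_cons big_nil addr0 mul1r.
Qed.

Lemma rel_comb a b d (m k : int) : rel a -> rel b ->
  (forall M, coef d M = m * coef a M + k * coef b M) -> rel d.
Proof.
move=> ra rb E; apply: (rel_free (a := fscale m a ++ fscale k b)).
  by move=> M; rewrite coef_cat !coef_scale E.
by apply: rel_cat; apply: rel_scale.
Qed.

Local Notation G := (groth_eq Cl).

Lemma G_rel a b : G a b -> rel (a ++ fscale (-1) b). Proof. by []. Qed.

Lemma G_free a b : free_eq a b -> G a b.
Proof.
move=> E; apply: (rel_free (a := [::])); last exact: rel_nil.
by move=> M; rewrite coef_nil coef_cat coef_scale E; ring.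
Qed.

Lemma G_refl a : G a a. Proof. exact: G_free. Qed.

Lemma G_comb2 a b c d x y (m k : int) : G a b -> G c d ->
  (forall M, coef x M - coef y M = m * (coef a M - coef b M) + k * (coef c M - coef d M)) ->
  G x y.
Proof.
move=> r1 r2 E; apply: (rel_comb (m := m) (k := k) r1 r2) => M.
by rewrite !coef_cat !coef_scale !mulN1r E.
Qed.

Lemma G_comb3 a b c d e f x y (m k l : int) : G a b -> G c d -> G e f ->
  (forall M, coef x M - coef y M = m * (coef a M - coef b M) + k * (coef c M - coef d M)
                                   + l * (coef e M - coef f M)) ->
  G x y.
Proof.
move=> r1 r2 r3 E.
have r12 : rel (fscale m (a ++ fscale (-1) b) ++ fscale k (c ++ fscale (-1) d)).
  by apply: rel_cat; apply: rel_scale.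
apply: (rel_comb (m := 1) (k := l) r12 r3) => M.
by rewrite !coef_cat !coef_scale !coef_cat !coef_scale !mulN1r E; ring.
Qed.

Lemma G_sym a b : G a b -> G b a.
Proof. by move=> H; apply: (G_comb2 (m := -1) (k := 0) H H) => M; ring. Qed.
Lemma G_trans a b c : G a b -> G b c -> G a c.
Proof. by move=> H1 H2; apply: (G_comb2 (m := 1) (k := 1) H1 H2) => M; ring. Qed.

Lemma G_iso M N : Cl M -> Cl N -> mod_iso M N -> G [:: (1, M)] [:: (1, N)].
Proof.
move=> cM cN I; apply: (rel_free (a := [:: (1, M); (-1, N)])).
  by move=> X; rewrite coef_cat coef_scale !coef_cons !coef_nil; ring.
by apply: rel_gen; left; exists M, N.
Qed.

Lemma G_ses M1 M M2 : Cl M1 -> Cl M -> Cl M2 -> short_exact M1 M M2 ->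
  G [:: (1, M)] [:: (1, M1); (1, M2)].
Proof.
move=> c1 c c2 S; apply: (rel_free (a := [:: (1, M); (-1, M1); (-1, M2)])).
  by move=> X; rewrite coef_cat coef_scale !coef_cons !coef_nil; ring.
by apply: rel_gen; right; exists M1, M, M2.
Qed.

End Rel.

Lemma rel_mono (C D : lmodType R -> Prop) s :
  (forall M, C M -> D M) -> groth_rel C s -> groth_rel D s.
Proof.
move=> CD [gs [F E]]; exists gs; split => //.
elim: gs F {E} => [|q gs IH] F //; inversion F; constructor; auto.
case: H1 => [[M [N [cM cN I ->]]]|[M1 [M [M2 [c1 c c2 S ->]]]]].
  by left; exists M, N; split; auto.
by right; exists M1, M, M2; split; auto.
Qed.

Local Notation C := (@fg_projective R).
Local Notation G := (groth_eq C).

Lemma G_comb4 a b c d e f g h x y (m k l o : int) : G a b -> G c d -> G e f -> G g h ->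
  (forall M, coef x M - coef y M = m * (coef a M - coef b M) + k * (coef c M - coef d M)
              + l * (coef e M - coef f M) + o * (coef g M - coef h M)) ->
  G x y.
Proof.
move=> r1 r2 r3 r4 E.
have r12 : G (fscale m a ++ fscale k c) (fscale m b ++ fscale k d).
  by apply: (G_comb2 (m := m) (k := k) r1 r2) => M; rewrite !coef_cat !coef_scale; ring.
apply: (G_comb3 (m := 1) (k := l) (l := o) r12 r3 r4) => M.
by rewrite E !coef_cat !coef_scale; ring.
Qed.

Inductive En : nat -> lmodType R -> fsum R -> Prop :=
| En0 M : fg_projective M -> En 0 M [:: (1, M)]
| EnS n M K P y : fg_projective P -> short_exact K P M -> En n K y ->
    En n.+1 M ((1, P) :: fscale (-1) y).

Lemma En0_inv M x : En 0 M x -> x = [:: (1, M)] /\ fg_projective M.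
Proof. by move=> H; inversion H. Qed.

Lemma triv_zero Z : trivial_mod Z -> G [:: (1, Z)] [::].
Proof.
move=> tZ; have cZ := fgproj_triv tZ.
have H := G_ses cZ cZ cZ (ses_triv Z tZ).
by apply: (G_comb2 (m := -1) (k := 0) H H) => M; rewrite !coef_cons !coef_nil; ring.
Qed.

Lemma G_prod A B : C A -> C B -> G [:: (1, (prod A B : lmodType R))] [:: (1, A); (1, B)].
Proof.
by move=> cA cB; apply: G_ses => //; [apply: fgproj_prod|apply: ses_split].
Qed.

Lemma En_step n M x : En n M x ->
  exists K P y m, [/\ fg_projective P, short_exact K P M, En m K y,
    G x ((1, P) :: fscale (-1) y) &
    (m < n)%N \/ [/\ n = 0%N, m = 0%N & trivial_mod K]].
Proof.
case=> [M' cM|n' M' K P y cP S E].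
  have tZ := @Zm_triv M'.
  exists (@Zm M'), M', [:: (1, @Zm M')], 0%N; split => //.
  - exact: ses_triv.
  - by constructor; apply: fgproj_triv.
  - have H := triv_zero tZ.
    apply: (G_comb2 (m := 1) (k := 0) H H) => X.
    by rewrite !coef_cons /= !coef_nil; ring.
  - by right.
exists K, P, y, n'; split => //; [exact: G_refl | by left].
Qed.

Lemma En_supp n M x : En n M x -> supported C x.
Proof.
elim=> [M' cM|n' M' K P y cP S E IH]; first by constructor.
constructor => //=; elim: y IH {E} => [|q y IHy] H //=; inversion H; constructor; auto.
Qed.

Lemma euler_uniq k : forall n1 n2 M x M' x' A B, (n1 + n2 < k)%N ->
  En n1 M x -> En n2 M' x' -> C A -> C B -> mod_iso (prod M A) (prod M' B) ->
  G (x ++ [:: (1, A)]) (x' ++ [:: (1, B)]).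
Proof.
elim: k => [//|k IH] n1 n2 M x M' x' A B lt E1 E2 cA cB I.
have [z|nz] := eqVneq (n1 + n2)%N 0%N.
  move/eqP: z => z; have n10 : n1 = 0%N by lia.
  have n20 : n2 = 0%N by lia.
  subst n1 n2.
  move/En0_inv: E1 => [-> cM]; move/En0_inv: E2 => [-> cM'].
  have cMA := fgproj_prod cM cA; have cMB := fgproj_prod cM' cB.
  have H1 := G_prod cM cA; have H2 := G_prod cM' cB; have H3 := G_iso cMA cMB I.
  apply: (G_comb3 (m := -1) (k := 1) (l := 1) H1 H2 H3) => X.
  by rewrite !coef_cat !coef_cons !coef_nil; ring.
have [K1 [P1 [y1 [m1 [cP1 S1 F1 G1 D1]]]]] := En_step E1.
have [K2 [P2 [y2 [m2 [cP2 S2 F2 G2 D2]]]]] := En_step E2.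
have I' := stable_schanuel S1 S2 cP1.2 cP2.2 cA.2 cB.2 I.
have cPB := fgproj_prod cP2 cB; have cPA := fgproj_prod cP1 cA.
have lt' : (m1 + m2 < k)%N.
  by case: D1 => [|[? ? ?]]; case: D2 => [|[? ? ?]]; subst; move: lt nz; lia.
have H := IH _ _ _ _ _ _ _ _ lt' F1 F2 cPB cPA I'.
have H' : G (y1 ++ [:: (1, P2); (1, B)]) (y2 ++ [:: (1, P1); (1, A)]).
  have Q1 := G_prod cP2 cB; have Q2 := G_prod cP1 cA.
  apply: (G_comb3 (m := 1) (k := -1) (l := 1) H Q1 Q2) => X.
  by rewrite !coef_cat !coef_cons !coef_nil; ring.
apply: (G_comb3 (m := 1) (k := -1) (l := -1) G1 H' G2) => X.
by rewrite !coef_cat !coef_cons !coef_scale !coef_nil; ring.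
Qed.

Lemma ses_triv_mid K1 K K2 : short_exact K1 K K2 -> trivial_mod K1 -> trivial_mod K2 ->
  trivial_mod K.
Proof.
move=> [j [q [ij sq eq]]] t1 t2 k.
have /eq [k1 <-] : q k = 0 by apply: t2.
by rewrite (t1 k1) linear0.
Qed.

Lemma euler_add k : forall n1 n2 M1 M M2 x1 x2, (n1 + n2 < k)%N ->
  En n1 M1 x1 -> En n2 M2 x2 -> short_exact M1 M M2 ->
  exists n x, En n M x /\ G x (x1 ++ x2).
Proof.
elim: k => [//|k IH] n1 n2 M1 M M2 x1 x2 lt E1 E2 S.
have [K1 [P1 [y1 [m1 [cP1 S1 F1 G1 D1]]]]] := En_step E1.
have [K2 [P2 [y2 [m2 [cP2 S2 F2 G2 D2]]]]] := En_step E2.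
have [K [SK SK']] := horseshoe S S1 S2 cP2.2.
have [mK [yK [FK GK]]] : exists mK yK, En mK K yK /\ G yK (y1 ++ y2).
  have [z|nz] := eqVneq (n1 + n2)%N 0%N.
    move/eqP: z => z.
    case: D1 => [|[_ m10 t1]]; first by lia.
    case: D2 => [|[_ m20 t2]]; first by lia.
    subst m1 m2; move/En0_inv: F1 => [-> _]; move/En0_inv: F2 => [-> _].
    have tK := ses_triv_mid SK' t1 t2.
    exists 0%N, [:: (1, K)]; split; first by constructor; apply: fgproj_triv.
    have T := triv_zero tK; have T1 := triv_zero t1; have T2 := triv_zero t2.
    apply: (G_comb3 (m := 1) (k := -1) (l := -1) T T1 T2) => X.
    by rewrite !coef_cat !coef_cons !coef_nil; ring.
  have lt' : (m1 + m2 < k)%N.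
    by case: D1 => [|[? ? ?]]; case: D2 => [|[? ? ?]]; subst; move: lt nz; lia.
  exact: IH lt' F1 F2 SK'.
have cPP := fgproj_prod cP1 cP2.
exists mK.+1, ((1, (prod P1 P2 : lmodType R)) :: fscale (-1) yK); split.
  exact: EnS cPP SK FK.
have Q := G_prod cP1 cP2.
apply: (G_comb4 (m := -1) (k := -1) (l := -1) (o := 1) G1 G2 GK Q) => X.
by rewrite !coef_cat !coef_cons !coef_scale !coef_nil; ring.
Qed.

Lemma fgproj_sfp M : fg_projective M -> super_fin_pres M.
Proof.
move=> cM.
pose P := fun i : nat => match i with 0%N => M | _.+1 => Zm M end.
have tZ := @Zm_triv M.
exists P, (fun i => @zlin (P i.+1) (P i)), (@idlin M); split.
- by case=> [|i] //=; apply: fgproj_triv.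
- by move=> y; exists y.
- move=> y; split => [Ey|[x Ex]]; first by exists 0; have -> : y = 0 := Ey.
  by rewrite -Ex.
- move=> i y; split => [_|[x Ex]]; first by exists 0; rewrite (tZ y).
  by rewrite -Ex.
Qed.

Lemma sfp_ext K P M : super_fin_pres K -> short_exact K P M -> fg_projective P ->
  super_fin_pres M.
Proof.
move=> [PK [dK [eK [cPK seK exK exdK]]]] [i [p [ii sp ep]]] cP.
pose P' := fun j : nat => match j with 0%N => P | j'.+1 => PK j' end.
pose d' := fun j => match j as j0 return {linear P' j0.+1 -> P' j0} with
                    | 0%N => complin i eK | j'.+1 => dK j' end.
exists P', d', p; split => //.
- by case.
- move=> y; rewrite ep; split.
    by case=> k <-; have [x <-] := seK k; exists x.
  by case=> x <-; exists (eK x).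
- case=> [|j] y /=.
    rewrite /complin /mklin /=; split.
      by rewrite -(linear0 i) => /ii /exK.
    by move=> /exK ->; rewrite linear0.
  exact: exdK.
Qed.

Section Syz.
Variables (M : lmodType R) (P : nat -> lmodType R)
          (d : forall i, {linear P i.+1 -> P i}) (e : {linear P 0%N -> M}).
Definition Tt (k : nat) : lmodType R := match k with 0%N => M | j.+1 => P j end.
Definition delta k : {linear P k -> Tt k} :=
  match k as k0 return {linear P k0 -> Tt k0} with 0%N => e | j.+1 => d j end.
Definition Kd k : lmodType R := kerT (delta k).

Hypothesis se : surj e.
Hypothesis ex0 : exact_at (d 0) e.
Hypothesis exS : forall i, exact_at (d i.+1) (d i).

Lemma exact_delta k : exact_at (delta k.+1) (delta k).
Proof. by case: k. Qed.

Lemma Kd_ses k : short_exact (Kd k.+1) (P k.+1) (Kd k).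
Proof. exact: (ses_ker (@exact_delta k)). Qed.

Lemma Kd_ses0 : short_exact (Kd 0) (P 0) M.
Proof. exact: (ses_ker0 se). Qed.

Lemma Kd_triv n : trivial_mod (P n.+1) -> trivial_mod (Kd n).
Proof.
move=> tP y; apply: (@kinc_inj _ _ (delta n)).
have := kincP y; case/(@exact_delta n) => x <-.
by rewrite (tP x) !linear0.
Qed.
End Syz.

Lemma syz_stable M (P : nat -> lmodType R) (d : forall i, {linear P i.+1 -> P i})
  (e : {linear P 0%N -> M}) (Q : nat -> lmodType R) (d' : forall i, {linear Q i.+1 -> Q i})
  (e' : {linear Q 0%N -> M}) :
  surj e -> exact_at (d 0%N) e -> (forall i, exact_at (d i.+1) (d i)) ->
  surj e' -> exact_at (d' 0%N) e' -> (forall i, exact_at (d' i.+1) (d' i)) ->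
  (forall i, projective (P i)) -> (forall i, projective (Q i)) ->
  forall k, exists A B, [/\ projective A, projective B &
     mod_iso (prod (@Kd M P d e k) A) (prod (@Kd M Q d' e' k) B)].
Proof.
move=> se e0 eS se' e0' eS' pP pQ; elim=> [|k [A [B [pA pB I]]]].
  exists (Q 0%N), (P 0%N); split => //.
  by apply: schanuel; [apply: Kd_ses0| apply: Kd_ses0|apply: pP|apply: pQ].
exists (prod (Q k.+1) B), (prod (P k.+1) A); split; try exact: proj_prod.
exact: (stable_schanuel (Kd_ses e0 eS k) (Kd_ses e0' eS' k) (pP _) (pQ _) pA pB I).
Qed.

Lemma sfp_En M : super_fin_pres M -> finite_pd M -> exists n x, En n M x.
Proof.
move=> [P [d [e [cP se e0 eS]]]] [n [Q [d' [e' [cQ se' e0' eS']]]]].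
have [A [B [pA pB I]]] := syz_stable se e0 eS se' e0' eS'
  (fun i => (cP i).2) (fun i => (cQ i).1) n.
have tK := Kd_triv e0' eS' (fun y => (cQ n.+1).2 (leqnn _) y).
have pKA : projective (prod (Kd d e n) A).
  apply: (proj_iso (P := B)) => //; apply: iso_sym.
  exact: iso_trans I (iso_triv_l B tK).
have cK : fg_projective (Kd d e n).
  split; last exact: proj_summand pKA.
  have [i [p [_ sp _]]] := Kd_ses e0 eS n.
  exact: fg_surj (cP n.+1).1 sp.
have H : forall m k, (n - k = m)%N -> (k <= n)%N -> exists j x, En j (Kd d e k) x.
  elim=> [|m IH] k Hm Hk.
    have -> : k = n by lia.
    by exists 0%N, [:: (1, Kd d e n)]; constructor.
  have [j [x F]] : exists j x, En j (Kd d e k.+1) x by apply: IH; lia.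
  by exists j.+1, ((1, P k.+1) :: fscale (-1) x); apply: EnS (cP _) (Kd_ses e0 eS k) F.
have [j [x F]] := H n 0%N (subn0 n) (leq0n n).
by exists j.+1, ((1, P 0%N) :: fscale (-1) x); apply: EnS (cP _) (Kd_ses0 d se) F.
Qed.

Local Notation D := (@super_fin_pres R).

Lemma En_sfp n M x : En n M x -> super_fin_pres M /\ groth_eq D x [:: (1, M)].
Proof.
elim=> [M' cM|n' M' K P y cP S E [sK HK]].
  by split; [apply: fgproj_sfp | apply: G_refl].
have sM := sfp_ext sK S cP; split => //.
have HS := G_ses sK (fgproj_sfp cP) sM S.
apply: (G_comb2 (m := 1) (k := -1) HS HK) => X.
by rewrite !coef_cons !coef_scale ?coef_cons ?coef_nil; ring.
Qed.

Definition chi (M : lmodType R) : fsum R :=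
  ClassicalEpsilon.epsilon (inhabits [::]) (fun x => exists n, En n M x).

Lemma chiP M : (exists n x, En n M x) -> exists n, En n M (chi M).
Proof.
move=> [n [x E]].
exact: (ClassicalEpsilon.epsilon_spec (inhabits [::]) (fun x => exists n, En n M x)
          (ex_intro _ x (ex_intro _ n E))).
Qed.

Definition chit (s : fsum R) : fsum R := flatten (map (fun p => fscale p.1 (chi p.2)) s).

Lemma chit_cat s t : chit (s ++ t) = chit s ++ chit t.
Proof. by rewrite /chit map_cat flatten_cat. Qed.
Lemma chit_cons a M s : chit ((a, M) :: s) = fscale a (chi M) ++ chit s.
Proof. by []. Qed.
Lemma coef_chit s N : coef (chit s) N = \sum_(p <- s) p.1 * coef (chi p.2) N.
Proof.
elim: s => [|[a M] s IH]; first by rewrite coef_nil big_nil.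
by rewrite chit_cons coef_cat coef_scale IH big_cons.
Qed.

Lemma sum_split (s : fsum R) M (F : lmodType R -> int) :
  \sum_(p <- s) p.1 * F p.2 =
  coef s M * F M + \sum_(p <- [seq q <- s | ind q.2 M != 1]) p.1 * F p.2.
Proof.
elim: s => [|[a N] s IH]; first by rewrite coef_nil big_nil mul0r add0r.
rewrite big_cons IH coef_cons /= /ind.
case: (excluded_middle_informative (N = M)) => [E|nNM] /=.
  by rewrite E mulr1 mulrDl addrA.
by rewrite big_cons /= mulr0 add0r addrCA.
Qed.

Lemma coef_filt (s : fsum R) M N :
  coef [seq q <- s | ind q.2 M != 1] N = if excluded_middle_informative (M = N) then 0 else coef s N.
Proof.
elim: s => [|[a K] s IH]; first by rewrite coef_nil; case: excluded_middle_informative.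
rewrite /= {1}/ind; case: (excluded_middle_informative (K = M)) => [EK|nKM] /=.
  rewrite IH coef_cons /ind.
  case: (excluded_middle_informative (M = N)) => [//|nMN] /=.
  case: (excluded_middle_informative (K = N)) => [EKN|nKN]; last by rewrite mulr0 add0r.
  by case: nMN; rewrite -EK.
rewrite !coef_cons IH /ind.
case: (excluded_middle_informative (M = N)) => [EMN|//].
case: (excluded_middle_informative (K = N)) => [EKN|nKN]; last by rewrite mulr0 add0r.
by case: nKM; rewrite EKN.
Qed.

Lemma sum_free k : forall (s t : fsum R), (size s + size t < k)%N -> free_eq s t ->
  forall F : lmodType R -> int, \sum_(p <- s) p.1 * F p.2 = \sum_(p <- t) p.1 * F p.2.
Proof.
elim: k => [//|k IH] s t lt E F.
case Est: (s ++ t) => [|[a M] r].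
  by move: Est; case: s {lt E} => //; case: t.
rewrite (sum_split s M) (sum_split t M) E; congr (_ + _); apply: IH.
  pose Pm := (fun q : int * lmodType R => ind q.2 M != 1).
  have Hh : has (predC Pm) (s ++ t).
    by rewrite Est /= /Pm /ind; case: excluded_middle_informative.
  move: Hh lt; rewrite has_cat !has_count !size_filter -/Pm.
  have := count_predC Pm s; have := count_predC Pm t.
  lia.
by move=> X; rewrite !coef_filt E.
Qed.

Lemma chit_free s t : free_eq s t -> free_eq (chit s) (chit t).
Proof.
move=> E N; rewrite !coef_chit.
exact: (@sum_free (size s + size t).+1 s t (ltnSn _) E (fun M => coef (chi M) N)).
Qed.

Lemma coef_chit_scale n s N : coef (chit (fscale n s)) N = n * coef (chit s) N.
Proof.
by rewrite !coef_chit /fscale big_map big_distrr; apply: eq_bigr => p _ /=; rewrite mulrA.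
Qed.

Lemma chit_rel (Cl : lmodType R -> Prop) s :
  List.Forall (fun p => groth_eq Cl [:: (1, p.2)] (chi p.2)) s -> groth_eq Cl s (chit s).
Proof.
elim: s => [|[a M] s IH] F; first by apply: G_refl.
inversion F; subst.
apply: (G_comb2 (m := a) (k := 1) H1 (IH H2)) => X.
by rewrite chit_cons !coef_cat !coef_cons !coef_scale !coef_nil; ring.
Qed.

Lemma chit_supp s : List.Forall (fun p => supported C (chi p.2)) s -> supported C (chit s).
Proof.
elim: s => [|[a M] s IH] F //=; inversion F; subst.
rewrite chit_cons; apply/List.Forall_app; split; last exact: IH.
elim: (chi M) H1 => [|q l IHl] H //=; inversion H; constructor; auto.
Qed.

Section Main.
Hypothesis Hpd : forall M : lmodType R, super_fin_pres M -> finite_pd M.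

Lemma chi_En M : super_fin_pres M -> exists n, En n M (chi M).
Proof. by move=> sM; apply: chiP; apply: sfp_En => //; apply: Hpd. Qed.

Lemma chi_iso M N n m x y : En n M x -> En m N y -> mod_iso M N -> G x y.
Proof.
move=> E1 E2 I.
have tM := @Zm_triv M; have tN := @Zm_triv N.
have H := @euler_uniq (n + m).+1 n m M x N y (Zm M) (Zm N) (ltnSn _) E1 E2
  (fgproj_triv tM) (fgproj_triv tN) (iso_prod I (iso_triv tM tN)).
apply: (G_comb3 (m := 1) (k := -1) (l := 1) H (triv_zero tM) (triv_zero tN)) => X.
by rewrite !coef_cat !coef_cons !coef_nil; ring.
Qed.

Lemma chi_gen g : groth_gen D g -> groth_rel C (chit g).
Proof.
case=> [[M [N [sM sN I ->]]]|[M1 [M [M2 [s1 s s2 S ->]]]]].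
  have [n E1] := chi_En sM; have [m E2] := chi_En sN.
  have H := chi_iso E1 E2 I.
  apply: (rel_free (a := chi M ++ fscale (-1) (chi N))) => //.
  by move=> X; rewrite !chit_cons !coef_cat !coef_scale coef_nil; ring.
have [n1 E1] := chi_En s1; have [n E] := chi_En s; have [n2 E2] := chi_En s2.
have [k [x [Ex Gx]]] := @euler_add (n1 + n2).+1 n1 n2 M1 M M2 _ _ (ltnSn _) E1 E2 S.
have H1 := chi_iso Ex E (iso_refl M).
have H : G (chi M) (chi M1 ++ chi M2).
  apply: (G_comb2 (m := -1) (k := 1) H1 Gx) => X; ring.
apply: (rel_free (a := chi M ++ fscale (-1) (chi M1 ++ chi M2))) => //.
by move=> X; rewrite !chit_cons !coef_cat !coef_scale !coef_cat coef_nil; ring.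
Qed.

Lemma chi_C M : fg_projective M -> G [:: (1, M)] (chi M).
Proof.
move=> cM; have [n E] := chi_En (fgproj_sfp cM).
exact: chi_iso (En0 cM) E (iso_refl M).
Qed.

Lemma chi_D M : super_fin_pres M -> groth_eq D [:: (1, M)] (chi M).
Proof.
move=> sM; have [n E] := chi_En sM.
by apply: G_sym; case: (En_sfp E).
Qed.
End Main.
End Basics.

Theorem proposition5p2 (R : comPzRingType) :
  (forall M : lmodType R, super_fin_pres M -> finite_pd M) ->
  theta_is_iso R.
Proof.
move=> Hpd; split.
- move=> s t _ _; apply: rel_mono => M; exact: fgproj_sfp.
- move=> s t Ss St [gs [Fg Eg]].
  have Gs : groth_eq (@fg_projective R) s (chit s).
    by apply: chit_rel; apply: List.Forall_impl Ss => p; apply: chi_C.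
  have Gt : groth_eq (@fg_projective R) t (chit t).
    by apply: chit_rel; apply: List.Forall_impl St => p; apply: chi_C.
  have Hg : groth_rel (@fg_projective R) (chit (flatten (map (fun q => fscale q.1 q.2) gs))).
    elim: gs Fg {Eg} => [|q gs IH] F; first exact: rel_nil.
    inversion F; subst; rewrite /= chit_cat; apply: rel_cat; last exact: IH.
    apply: (rel_free (a := fscale q.1 (chit q.2))).
      by move=> X; rewrite coef_scale coef_chit_scale.
    by apply: rel_scale; apply: chi_gen.
  have Hst : groth_eq (@fg_projective R) (chit s) (chit t).
    apply: (rel_free _ Hg) => X.
    have := chit_free Eg X; rewrite chit_cat => <-.
    by rewrite !coef_cat coef_chit_scale coef_scale.
  apply: (G_comb3 (m := 1) (k := 1) (l := -1) Gs Hst Gt) => X; ring.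
- move=> s Ss; exists (chit s); split.
    apply: chit_supp; apply: List.Forall_impl Ss => p sp.
    by have [n E] := chi_En Hpd sp; apply: En_supp E.
  by apply: chit_rel; apply: List.Forall_impl Ss => p; apply: chi_D.
Qed.
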